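(* Let $s,t\in\mathbb N$. If $s>t$ then $\hom_{\Bbbk\mathbf{FA}}(\overline P^{\otimes s},\overline P^{\otimes t})=0$. If $s=t$, the place-permutation action of $\mathfrak S_t$ on $\overline P^{\otimes t}$ induces an isomorphism of $\Bbbk$-algebras $\Bbbk\mathfrak S_t\cong\mathrm{End}_{\Bbbk\mathbf{FA}}(\overline P^{\otimes t})$.
   Context: Let $\Bbbk$ be a field. $\mathbf{FA}$ denotes the category of finite sets and all maps, and $\mathbf{FI}$, $\mathbf{FS}$, $\mathbf{FB}$ its wide subcategories of injections, surjections and bijections respectively; $\mathbf n=\{1,\dots,n\}$ for $n\in\mathbb N$ ($\mathbf 0=\emptyset$), and $\mathfrak S_n$ is the symmetric group. For a category $\mathcal C$, $\Bbbk\mathcal C(X,Y)$ is the $\Bbbk$-vector space with basis $\mathcal C(X,Y)$. A $\Bbbk\mathbf{FA}$-module is a functor from $\mathbf{FA}$ to $\Bbbk$-vector spaces (these form the abelian category $\mathcal F(\mathbf{FA})$); $\otimes$ denotes the pointwise tensor product over $\Bbbk$, and $\hom_{\Bbbk\mathbf{FA}}$ denotes natural transformations. $P^{\mathbf{FA}}_{\mathbf n}:=\Bbbk\mathbf{FA}(\mathbf n,-)$, so $P^{\mathbf{FA}}_{\mathbf n}(X)\cong\Bbbk[X]^{\otimes n}$ (where $\Bbbk[X]$ has basis $\{[x]:x\in X\}$), with the right $\mathfrak S_n$-action by precomposition, equivalently place permutation of tensor factors; write $P^{\mathbf{FA}}:=P^{\mathbf{FA}}_{\mathbf 1}$. Let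 $\overline{\Bbbk}$ be the functor with value $\Bbbk$ on non-empty sets (all maps acting by the identity) and $0$ on $\emptyset$, and $\Bbbk_{\mathbf 0}$ the functor with value $\Bbbk$ on $\emptyset$ and $0$ on non-empty sets. $\overline P$ is the kernel of the surjection $P^{\mathbf{FA}}\to\overline\Bbbk$, $[x]\mapsto 1$; thus $\overline P(X)=\{\sum_x a_x[x]:\sum_x a_x=0\}$. For $n\ge1$, $\overline P^{\otimes n}$ is the $n$-fold pointwise tensor power, a subfunctor of $P^{\mathbf{FA}}_{\mathbf n}$ stable under the place-permutation right action of $\mathfrak S_n$; by convention $\overline P^{\otimes 0}:=\overline\Bbbk$. *)

(* Defs.v *)
(* A finite set is a finType; a map of FA is any function between finTypes. *)
From HB Require Import structures.
From mathcomp Require Import all_boot all_order all_algebra.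
From mathcomp Require Import fingroup perm.
Set Implicit Arguments. Unset Strict Implicit. Unset Printing Implicit Defensive.
Import GRing.Theory.
Local Open Scope ring_scope.

Section Defs.
Variable K : fieldType.

(* P^{FA}_s(X) = K[X]^{(x)s}: basis indexed by maps u : s -> X
   (u <-> [u 1] (x) ... (x) [u s]); vectors = coefficient functions. *)
Definition Pt (s : nat) (X : finType) := {ffun {ffun 'I_s -> X} -> K}.

(* functoriality: f : X -> Y sends e_u to e_{f o u} *)
Definition Pmap (s : nat) (X Y : finType) (f : X -> Y) (v : Pt s X) : Pt s Y :=
  [ffun w => \sum_(u : {ffun 'I_s -> X} | [ffun i => f (u i)] == w) v u].

Definition scalev (s : nat) (X : finType) (c : K) (v : Pt s X) : Pt s X :=
  [ffun u => c * v u].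

(* Pbar^{(x)s}(X): the span of pure tensors a_1 (x) ... (x) a_s with each
   a_i in Pbar(X) = {sum_x a_x [x] : sum_x a_x = 0}.  The first conjunct
   implements the convention Pbar^{(x)0} = kbar (zero on the empty set);
   for s >= 1 it is automatic. *)
Definition Pbar (s : nat) (X : finType) (v : Pt s X) : Prop :=
  (#|X| = 0%N -> v = 0) /\
  exists (m : nat) (c : 'I_m -> K) (a : 'I_m -> 'I_s -> {ffun X -> K}),
    (forall j i, \sum_(x : X) a j i x = 0) /\
    v = [ffun u : {ffun 'I_s -> X} => \sum_(j < m) c j * \prod_(i < s) a j i (u i)].

(* a natural transformation Pbar^{(x)s} -> Pbar^{(x)t}, given by maps on the
   ambient spaces whose values outside Pbar^{(x)s} are irrelevant *)
Definition NatTrans (s t : nat) (F : forall X : finType, Pt s X -> Pt t X) : Prop :=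
  (forall X v, Pbar v -> Pbar (F X v)) /\
  (forall X v w, Pbar v -> Pbar w -> F X (v + w) = F X v + F X w) /\
  (forall X (c : K) v, Pbar v -> F X (scalev c v) = scalev c (F X v)) /\
  (forall (X Y : finType) (f : X -> Y) v, Pbar v ->
      F Y (Pmap f v) = Pmap f (F X v)).

(* place permutation: sigma sends e_u to e_{u o sigma} (precomposition).
   With mathcomp's convention (g * h) x = h (g x) this is a homomorphism
   sigma |-> act sigma into End with ordinary composition. *)
Definition act (t : nat) (X : finType) (sigma : {perm 'I_t}) (v : Pt t X) : Pt t X :=
  [ffun w : {ffun 'I_t -> X} => v [ffun i => w ((sigma^-1)%g i)]].

(* group algebra K S_t: coefficient functions, convolution product, unit *)
Definition galg_mul (t : nat) (a b : {ffun {perm 'I_t} -> K}) : {ffun {perm 'I_t} -> K} :=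
  [ffun g => \sum_(h : {perm 'I_t}) \sum_(k : {perm 'I_t})
                if (h * k == g)%g then a h * b k else 0].
Definition galg_one (t : nat) : {ffun {perm 'I_t} -> K} :=
  [ffun g => if g == 1%g then 1 else 0].

Definition Phi (t : nat) (a : {ffun {perm 'I_t} -> K}) (X : finType) (v : Pt t X) : Pt t X :=
  \sum_(sigma : {perm 'I_t}) scalev (a sigma) (act sigma v).

End Defs.

(* Main.v *)
Require Import Defs.
From HB Require Import structures.
From mathcomp Require Import all_boot all_order all_algebra.
From mathcomp Require Import fingroup perm.
Set Implicit Arguments. Unset Strict Implicit. Unset Printing Implicit Defensive.
Import GRing.Theory.
Local Open Scope ring_scope.

Section Basics.
Variable K : fieldType.
Implicit Types (X Y : finType) (s t : nat).

Lemma addfE (T : finType) (f g : {ffun T -> K}) x : (f + g) x = f x + g x.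
Proof. by rewrite ffunE. Qed.
Lemma oppfE (T : finType) (f : {ffun T -> K}) x : (- f) x = - f x.
Proof. by rewrite ffunE. Qed.
Lemma zerofE (T : finType) x : (0 : {ffun T -> K}) x = 0.
Proof. by rewrite ffunE. Qed.

Lemma sum_ind (T : finType) (h : T -> K) (p : T) :
  \sum_(x : T) h x * (x == p)%:R = h p.
Proof.
rewrite (bigD1 p) //= eqxx mulr1 big1 ?addr0 // => x /negbTE ->; by rewrite mulr0.
Qed.

Lemma sum_delta (T : finType) (p : T) : \sum_(x : T) (p == x)%:R = 1 :> K.
Proof.
rewrite -[RHS](sum_ind (fun _ => 1) p); apply: eq_bigr => x _.
by rewrite mul1r eq_sym.
Qed.

Lemma scalevE s X c (v : Pt K s X) u : scalev c v u = c * v u.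
Proof. by rewrite ffunE. Qed.

Lemma Pbar0 s X : Pbar (0 : Pt K s X).
Proof.
split=> //; exists 0%N, (fun _ => 0), (fun _ _ => 0); split; first by case.
by apply/ffunP=> u; rewrite !ffunE big_ord0.
Qed.

Lemma PbarD s X (v w : Pt K s X) : Pbar v -> Pbar w -> Pbar (v + w).
Proof.
move=> [v0 [m1 [c1 [a1 [Ha1 ev]]]]] [w0 [m2 [c2 [a2 [Ha2 ew]]]]].
split; first by move=> H; rewrite v0 // w0 // addr0.
exists (m1 + m2)%N, (fun k => match split k with inl j => c1 j | inr j => c2 j end),
  (fun k => match split k with inl j => a1 j | inr j => a2 j end); split.
  by move=> k i; case: (split k) => j; [apply: Ha1 | apply: Ha2].
apply/ffunP=> u; rewrite ev ew !ffunE big_split_ord /=; congr (_ + _).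
  apply: eq_bigr => j _.
  by have -> : split (lshift m2 j) = inl j := unsplitK (inl j).
apply: eq_bigr => j _.
by have -> : split (rshift m1 j) = inr j := unsplitK (inr j).
Qed.

Lemma PbarZ s X c (v : Pt K s X) : Pbar v -> Pbar (scalev c v).
Proof.
move=> [v0 [m [c1 [a [Ha ev]]]]]; split.
  by move=> H; rewrite v0 //; apply/ffunP=> u; rewrite !ffunE mulr0.
exists m, (fun j => c * c1 j), a; split=> //.
by apply/ffunP=> u; rewrite ev !ffunE mulr_sumr; apply: eq_bigr => j _; rewrite mulrA.
Qed.

Lemma Pbar_sum s X (I : Type) (r : seq I) (P : pred I) (h : I -> Pt K s X) :
  (forall i, P i -> Pbar (h i)) -> Pbar (\sum_(i <- r | P i) h i).
Proof. by move=> H; apply: big_ind => //; [exact: Pbar0 | exact: PbarD]. Qed.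

Lemma NT0 s t (F : forall X : finType, Pt K s X -> Pt K t X) X :
  NatTrans F -> F X 0 = 0.
Proof.
move=> [_ [HD _]]; have := HD X 0 0 (Pbar0 _ _) (Pbar0 _ _).
rewrite addr0 => h; apply/esym/(addrI (F X 0)); by rewrite addr0.
Qed.

Lemma NT_sum s t (F : forall X : finType, Pt K s X -> Pt K t X) X
   (I : Type) (r : seq I) (P : pred I) (h : I -> Pt K s X) :
  NatTrans F -> (forall i, P i -> Pbar (h i)) ->
  F X (\sum_(i <- r | P i) h i) = \sum_(i <- r | P i) F X (h i).
Proof.
move=> NF H; elim: r => [|x r IH]; first by rewrite !big_nil (NT0 X NF).
rewrite !big_cons; case: ifP => Px //.
case: NF => [_ [HD _]]; rewrite HD ?IH //; [exact: H | exact: Pbar_sum].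
Qed.

Lemma PmapE s X Y (f : X -> Y) (v : Pt K s X) w :
  Pmap f v w = \sum_(u : {ffun 'I_s -> X} | [ffun i => f (u i)] == w) v u.
Proof. by rewrite ffunE. Qed.

Lemma Pmap0 s X Y (f : X -> Y) : Pmap f (0 : Pt K s X) = 0.
Proof. apply/ffunP=> w; rewrite !ffunE big1 // => u _; by rewrite ffunE. Qed.

Lemma Pmap_prod s X Y (f : X -> Y) (a : 'I_s -> {ffun X -> K}) :
  Pmap f [ffun u : {ffun 'I_s -> X} => \prod_(i < s) a i (u i)] =
  [ffun w : {ffun 'I_s -> Y} => \prod_(i < s) \sum_(x : X) (f x == w i)%:R * a i x].
Proof.
apply/ffunP=> w; rewrite !ffunE bigA_distr_bigA /= [LHS]big_mkcond /=.
apply: eq_bigr => u _; rewrite ffunE big_split /=.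
case: eqP => [<-|ne].
  rewrite [X in _ = X * _]big1 ?mul1r // => i _; by rewrite ffunE eqxx.
case: (pickP (fun i => f (u i) != w i)) => [i Hi|H].
  by rewrite (bigD1 i) //= (negbTE Hi) !mul0r.
exfalso; apply: ne; apply/ffunP => i; rewrite ffunE; apply/eqP.
by move/negbFE: (H i).
Qed.

Lemma Pmap_inv s X (g : X -> X) (v : Pt K s X) w : involutive g ->
  Pmap g v w = v [ffun i => g (w i)].
Proof.
move=> gK; rewrite ffunE (big_pred1 [ffun i => g (w i)]) // => u /=.
apply/eqP/eqP => [<-|->]; apply/ffunP=> i; by rewrite !ffunE ?gK.
Qed.

End Basics.

Section Gen.
Variable K : fieldType.
Implicit Types (X Y : finType) (s t : nat).

Definition Xs (s : nat) : finType := option ('I_s * bool)%type.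
Definition ee s (i : 'I_s) : {ffun Xs s -> K} :=
  [ffun x => (x == Some (i, true))%:R - (x == Some (i, false))%:R].
Definition om s : Pt K s (Xs s) := [ffun u : {ffun 'I_s -> Xs s} => \prod_(i < s) ee i (u i)].
Definition col s (i : 'I_s) (x : Xs s) : Xs s :=
  if x == Some (i, true) then Some (i, false) else x.
Definition swp s (i : 'I_s) (x : Xs s) : Xs s :=
  if x == Some (i, true) then Some (i, false)
  else if x == Some (i, false) then Some (i, true) else x.
Definition blk s (x : Xs s) : option 'I_s := omap fst x.

Lemma SomeE s (i j : 'I_s) (b c : bool) :
  (Some (i, b) == Some (j, c) :> Xs s) = (i == j) && (b == c).
Proof. by []. Qed.

Lemma ee_sum s i : \sum_(x : Xs s) ee i x = 0.
Proof.
under eq_bigr do rewrite ffunE.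
rewrite sumrB.
have E p : \sum_(x : Xs s) (x == p)%:R = 1 :> K.
  by rewrite -[RHS](sum_delta K p); apply: eq_bigr => x _; rewrite eq_sym.
by rewrite !E subrr.
Qed.

Lemma Pbar_om s : Pbar (om s).
Proof.
split; first by move=> H; exfalso; exact: (fintype0 (None : Xs s) H).
exists 1%N, (fun _ => 1), (fun _ i => ee i); split; first by move=> _ i; exact: ee_sum.
by apply/ffunP=> u; rewrite !ffunE big_ord1 mul1r.
Qed.

Lemma push_ee s Y (f : Xs s -> Y) i y :
  \sum_(x : Xs s) (f x == y)%:R * ee i x =
  (f (Some (i, true)) == y)%:R - (f (Some (i, false)) == y)%:R.
Proof.
under eq_bigr do rewrite ffunE mulrBr.
by rewrite sumrB (sum_ind (fun x => (f x == y)%:R)) (sum_ind (fun x => (f x == y)%:R)).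
Qed.

Lemma Pmap_col_om s (i : 'I_s) : Pmap (col i) (om s) = 0.
Proof.
rewrite /om Pmap_prod; apply/ffunP=> w; rewrite !ffunE (bigD1 i) //= push_ee.
by rewrite /col eqxx SomeE andbF subrr mul0r.
Qed.

Lemma swpK s (i : 'I_s) : involutive (swp i).
Proof.
move=> x; rewrite /swp.
case: (x =P Some (i, true)) => [->|h1]; first by rewrite SomeE andbF eqxx.
case: (x =P Some (i, false)) => [->|h2]; first by rewrite eqxx.
by rewrite (introF eqP h1) (introF eqP h2).
Qed.

Lemma swp_ne s (i k : 'I_s) b : k != i -> swp i (Some (k, b)) = Some (k, b).
Proof. by move=> /negbTE ne; rewrite /swp !SomeE ne. Qed.

Lemma swp_t s (i : 'I_s) : swp i (Some (i, true)) = Some (i, false).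
Proof. by rewrite /swp eqxx. Qed.

Lemma ee_swp s (i k : 'I_s) x :
  ee k (swp i x) = if k == i then - ee k x else ee k x.
Proof.
rewrite !ffunE !(inv_eq (swpK i)).
case: (k =P i) => [->|/eqP ne]; last by rewrite !swp_ne.
by rewrite swp_t /swp SomeE andbF eqxx opprB.
Qed.

Lemma Pmap_swp_om s (i : 'I_s) : Pmap (swp i) (om s) = scalev (-1) (om s).
Proof.
apply/ffunP=> w; rewrite (Pmap_inv _ _ (swpK i)) /om /scalev !ffunE.
rewrite (bigD1 i) //= [in RHS](bigD1 i) //=.
rewrite (ffunE (fun j => swp i (w j))) ee_swp eqxx mulN1r -mulNr; congr (_ * _).
apply: eq_bigr => k /negbTE kn.
by rewrite (ffunE (fun j => swp i (w j))) ee_swp kn.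
Qed.

End Gen.

Section Zero.
Variable K : fieldType.
Implicit Types (X Y : finType) (s t : nat).

Lemma Pmap_col_avoid s t (i : 'I_s) (z : Pt K t (Xs s)) (u : {ffun 'I_t -> Xs s}) :
  (forall j, blk (u j) != Some i) -> Pmap (col i) z u = z u.
Proof.
move=> Hu; rewrite PmapE (big_pred1 u) // => u' /=.
apply/eqP/eqP => [E|->].
  apply/ffunP => j; have := E; move/ffunP/(_ j); rewrite ffunE => Ej.
  have Hj := Hu j; rewrite -Ej /col in Hj *.
  by case: (u' j =P Some (i, true)) Hj => // _; rewrite /= eqxx.
apply/ffunP=> j; rewrite ffunE /col; case: (u j =P Some (i, true)) => // e.
by move: (Hu j); rewrite e /= eqxx.
Qed.

Lemma Z1_NT s t (G : forall X, Pt K s X -> Pt K t X) : NatTrans G ->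
  forall i (u : {ffun 'I_t -> Xs s}), (forall j, blk (u j) != Some i) -> G _ (om K s) u = 0.
Proof.
move=> NG i u Hu; rewrite -(Pmap_col_avoid _ Hu).
case: (NG) => [_ [_ [_ Hn]]]; rewrite -Hn; last exact: Pbar_om.
by rewrite Pmap_col_om (NT0 _ NG) ffunE.
Qed.

Lemma Z2_NT s t (G : forall X, Pt K s X -> Pt K t X) : NatTrans G ->
  forall i (u : {ffun 'I_t -> Xs s}), G _ (om K s) [ffun j => swp i (u j)] = - G _ (om K s) u.
Proof.
move=> NG i u; rewrite -(Pmap_inv (G _ (om K s)) u (swpK i)).
case: (NG) => [_ [_ [HZ Hn]]]; rewrite -Hn; last exact: Pbar_om.
rewrite Pmap_swp_om HZ; last exact: Pbar_om.
by rewrite scalevE mulN1r.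
Qed.

Lemma hit_all s t (u : {ffun 'I_t -> Xs s}) :
  (forall i, ~~ [forall j, blk (u j) != Some i]) ->
  exists2 rho : 'I_s -> 'I_t, injective rho & forall i, blk (u (rho i)) = Some i.
Proof.
move=> H.
have: forall i : 'I_s, exists j : 'I_t, blk (u j) == Some i.
  move=> i; move: (H i); rewrite negb_forall => /existsP [j]; rewrite negbK.
  by exists j.
case/fin_all_exists => rho Hrho; exists rho; last by move=> i; apply/eqP.
move=> i1 i2 e; have := Hrho i1; rewrite e (eqP (Hrho i2)) => /eqP [].
by move=> ->.
Qed.

Lemma zero_gt s t (z : Pt K t (Xs s)) : (t < s)%N ->
  (forall i (u : {ffun 'I_t -> Xs s}), (forall j, blk (u j) != Some i) -> z u = 0) -> z = 0.
Proof.
move=> lts Z1; apply/ffunP=> u; rewrite ffunE.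
case: (pickP (fun i : 'I_s => [forall j, blk (u j) != Some i])) => [i /forallP Hi|H].
  exact: Z1 Hi.
have [rho inj _] := hit_all (fun i => negbT (H i)).
have := leq_card rho inj; rewrite !card_ord => /leq_ltn_trans/(_ lts).
by rewrite ltnn.
Qed.

Lemma zero_eq t (z : Pt K t (Xs t)) :
  (forall i (u : {ffun 'I_t -> Xs t}), (forall j, blk (u j) != Some i) -> z u = 0) ->
  (forall i (u : {ffun 'I_t -> Xs t}), z [ffun j => swp i (u j)] = - z u) ->
  (forall sg : {perm 'I_t}, z [ffun j => Some (sg j, true)] = 0) -> z = 0.
Proof.
move=> Z1 Z2 Z3; apply/ffunP=> u; rewrite ffunE.
case: (pickP (fun i : 'I_t => [forall j, blk (u j) != Some i])) => [i /forallP Hi|H].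
  exact: Z1 Hi.
have [rho inj Hrho] := hit_all (fun i => negbT (H i)).
pose pi := perm inj.
set sg := (pi^-1)%g.
have Hb : forall j, blk (u j) = Some (sg j).
  move=> j; have e : rho (sg j) = j.
    by move: (permE inj (sg j)) => <-; rewrite /sg permKV.
  by rewrite -{1}e Hrho.
pose bb j := if u j is Some (_, b) then b else true.
have Eu : u = [ffun j => Some (sg j, bb j)] :> {ffun 'I_t -> Xs t}.
  apply/ffunP => j; rewrite ffunE /bb; move: (Hb j).
  by case: (u j) => [[k b]|] //= [->].
have main : forall r : seq 'I_t, forall b : 'I_t -> bool, (forall j, j \notin r -> b j) ->
    z [ffun j => Some (sg j, b j)] = 0.
  elim=> [|j0 r IH] b Hb'.
    have -> : [ffun j => Some (sg j, b j)] = [ffun j => Some (sg j, true)] :> {ffun 'I_t -> Xs t}.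
      by apply/ffunP=> j; rewrite !ffunE Hb'.
    exact: Z3.
  pose b' j := if j == j0 then true else b j.
  have Hb'' : forall j, j \notin r -> b' j.
    move=> j jr; rewrite /b'; case: eqP => // /eqP ne; apply: Hb'.
    by rewrite in_cons negb_or ne.
  case Bj0 : (b j0).
    have -> : [ffun j => Some (sg j, b j)] = [ffun j => Some (sg j, b' j)] :> {ffun 'I_t -> Xs t}.
      by apply/ffunP=> j; rewrite !ffunE /b'; case: eqP => // ->; rewrite Bj0.
    exact: IH.
  have -> : [ffun j => Some (sg j, b j)] =
     [ffun j => swp (sg j0) ([ffun j => Some (sg j, b' j)] j)] :> {ffun 'I_t -> Xs t}.
    apply/ffunP=> j; rewrite !ffunE /b'; case: (j =P j0) => [->|/eqP ne].
      by rewrite Bj0 swp_t.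
    by rewrite swp_ne // (inj_eq perm_inj).
  by rewrite Z2 IH // oppr0.
by rewrite Eu; apply: (main (enum 'I_t)) => j; rewrite mem_enum.
Qed.

End Zero.

Section Comb.
Variable K : fieldType.
Implicit Types (X Y : finType) (s t n : nat).

Definition fg s Y (y0 : Y) (g : {ffun 'I_s -> Y}) (x : Xs s) : Y :=
  if x is Some (i, true) then g i else y0.

Lemma Pmap_fg_om s Y (y0 : Y) g :
  Pmap (fg y0 g) (om K s) =
  [ffun w : {ffun 'I_s -> Y} => \prod_(i < s) ((g i == w i)%:R - (y0 == w i)%:R)].
Proof.
rewrite /om Pmap_prod; apply/ffunP=> w; rewrite !ffunE; apply: eq_bigr => i _.
by rewrite push_ee.
Qed.

Lemma Pbar_fg_om s Y (y0 : Y) g : Pbar (Pmap (fg y0 g) (om K s)).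
Proof.
split; first by move=> H; exfalso; exact: fintype0 y0 H.
exists 1%N, (fun _ => 1), (fun _ i => [ffun y => (g i == y)%:R - (y0 == y)%:R]); split.
  move=> _ i; under eq_bigr do rewrite ffunE.
  by rewrite sumrB !sum_delta subrr.
rewrite Pmap_fg_om; apply/ffunP => w; rewrite !ffunE big_ord1 mul1r.
by apply: eq_bigr => i _; rewrite ffunE.
Qed.

Definition comb s n Y (y0 : Y) m (c : 'I_m -> K) (a : 'I_m -> 'I_s -> {ffun Y -> K})
  (w : Pt K n (Xs s)) : Pt K n Y :=
  \sum_(j < m) \sum_(g : {ffun 'I_s -> Y})
     scalev (c j * \prod_(i < s) a j i (g i)) (Pmap (fg y0 g) w).

Lemma comb_om s Y (y0 : Y) m c (a : 'I_m -> 'I_s -> {ffun Y -> K}) :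
  (forall j i, \sum_y a j i y = 0) ->
  comb y0 c a (om K s) =
  [ffun u : {ffun 'I_s -> Y} => \sum_(j < m) c j * \prod_(i < s) a j i (u i)].
Proof.
move=> Ha; apply/ffunP=> u; rewrite /comb sum_ffunE ffunE; apply: eq_bigr => j _.
rewrite sum_ffunE.
under eq_bigr do rewrite scalevE Pmap_fg_om ffunE -mulrA -big_split /=.
rewrite -mulr_sumr.
rewrite -(bigA_distr_bigA (fun i y => a j i y * ((y == u i)%:R - (y0 == u i)%:R))).
congr (_ * _); apply: eq_bigr => i _.
under eq_bigr do rewrite mulrBr.
rewrite sumrB -mulr_suml Ha mul0r subr0.
exact: sum_ind.
Qed.

Lemma NT_comb s n (G : forall X, Pt K s X -> Pt K n X) Y (y0 : Y) m c
   (a : 'I_m -> 'I_s -> {ffun Y -> K}) : NatTrans G ->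
  G Y (comb y0 c a (om K s)) = comb y0 c a (G _ (om K s)).
Proof.
move=> NG; rewrite /comb NT_sum //; last first.
  by move=> j _; apply: Pbar_sum => g _; apply: PbarZ; apply: Pbar_fg_om.
apply: eq_bigr => j _; rewrite NT_sum //; last first.
  by move=> g _; apply: PbarZ; apply: Pbar_fg_om.
apply: eq_bigr => g _; case: (NG) => [_ [_ [HZ Hn]]].
rewrite HZ; last exact: Pbar_fg_om.
by rewrite Hn; last exact: Pbar_om.
Qed.

Lemma gen s n (G1 G2 : forall X, Pt K s X -> Pt K n X) : NatTrans G1 -> NatTrans G2 ->
  G1 _ (om K s) = G2 _ (om K s) -> forall Y (v : Pt K s Y), Pbar v -> G1 Y v = G2 Y v.
Proof.
move=> N1 N2 E Y v Pv.
case: (pickP (fun _ : Y => true)) => [y0 _|H].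
  case: Pv => [_ [m [c [a [Ha ev]]]]].
  by rewrite ev -(comb_om y0 c Ha) !NT_comb // E.
have Y0 : #|Y| = 0%N by apply: eq_card0 => y; have := H y.
case: N1 => [P1 _]; case: N2 => [P2 _].
by rewrite (proj1 (P1 _ _ Pv)) // (proj1 (P2 _ _ Pv)).
Qed.

End Comb.

Section PhiSec.
Variable K : fieldType.
Implicit Types (X Y : finType) (s t n : nat).

Lemma PhiE t (a : {ffun {perm 'I_t} -> K}) X (v : Pt K t X) w :
  Phi a v w = \sum_(sg : {perm 'I_t}) a sg * v [ffun i => w ((sg^-1)%g i)].
Proof. rewrite /Phi sum_ffunE; apply: eq_bigr => sg _; by rewrite !ffunE. Qed.

Lemma Pbar_act t X (sg : {perm 'I_t}) (v : Pt K t X) : Pbar v -> Pbar (act sg v).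
Proof.
move=> [v0 [m [c [a [Ha ev]]]]]; split.
  by move=> H; apply/ffunP => w; rewrite /act ffunE v0 // !ffunE.
exists m, c, (fun j i => a j (sg i)); split; first by move=> j i; apply: Ha.
apply/ffunP=> w; rewrite /act ffunE ev !ffunE; apply: eq_bigr => j _; congr (_ * _).
rewrite (reindex_inj (@perm_inj _ sg)) /=; apply: eq_bigr => i _.
by rewrite ffunE permK.
Qed.

Lemma NT_Phi t (a : {ffun {perm 'I_t} -> K}) : NatTrans (Phi a).
Proof.
split; first by move=> X v Pv; apply: Pbar_sum => sg _; apply: PbarZ; apply: Pbar_act.
split.
  move=> X v w _ _; apply/ffunP=> u; rewrite addfE !PhiE -big_split.
  by apply: eq_bigr => sg _; rewrite addfE mulrDr.
split.
  move=> X c v _; apply/ffunP=> u; rewrite scalevE !PhiE mulr_sumr.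
  by apply: eq_bigr => sg _; rewrite scalevE mulrCA.
move=> X Y f v _; apply/ffunP=> w.
rewrite PhiE PmapE.
under [RHS]eq_bigr do rewrite PhiE.
rewrite exchange_big /=; apply: eq_bigr => sg _.
rewrite PmapE mulr_sumr.
rewrite [RHS](reindex (fun u : {ffun 'I_t -> X} => [ffun i => u (sg i)])); last first.
  apply: onW_bij; exists (fun u : {ffun 'I_t -> X} => [ffun i => u ((sg^-1)%g i)]) => u;
  by apply/ffunP=> i; rewrite !ffunE ?permK ?permKV.
apply: eq_big => [u|u _].
  apply/eqP/eqP => H; apply/ffunP => i; rewrite !ffunE.
    by move/ffunP: H => /(_ (sg i)); rewrite !ffunE permK.
  by rewrite -H !ffunE permKV.
by congr (_ * v _); apply/ffunP=> i; rewrite !ffunE permKV.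
Qed.

Lemma Phi_one t X (v : Pt K t X) : Phi (galg_one K t) v = v.
Proof.
apply/ffunP=> w; rewrite PhiE (bigD1 1%g) //= ffunE eqxx mul1r big1 ?addr0; last first.
  by move=> sg /negbTE H; rewrite ffunE H mul0r.
by congr (v _); apply/ffunP=> i; rewrite ffunE invg1 perm1.
Qed.

Lemma Phi_mul t (a b : {ffun {perm 'I_t} -> K}) X (v : Pt K t X) :
  Phi (galg_mul a b) v = Phi a (Phi b v).
Proof.
apply/ffunP=> w; rewrite !PhiE.
under eq_bigr do rewrite ffunE mulr_suml.
under eq_bigr do under eq_bigr do rewrite mulr_suml.
rewrite exchange_big /=; apply: eq_bigr => h _.
rewrite exchange_big /= PhiE mulr_sumr; apply: eq_bigr => k _.
rewrite (bigD1 (h * k)%g) //= eqxx big1 ?addr0; last first.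
  by move=> g ne; rewrite eq_sym (negbTE ne) mul0r.
rewrite -mulrA; congr (_ * (_ * v _)); apply/ffunP=> i.
by rewrite !ffunE invMg permM.
Qed.

Lemma ee_true s (i k : 'I_s) : ee K i (Some (k, true)) = (k == i)%:R.
Proof. by rewrite ffunE !SomeE /= andbT andbF subr0. Qed.

Lemma om_perm t (p : 'I_t -> 'I_t) :
  om K t [ffun i => Some (p i, true)] = \prod_(i < t) (p i == i)%:R.
Proof.
rewrite {1}/om ffunE; apply: eq_bigr => i _.
by rewrite (ffunE (fun i => Some (p i, true) : Xs t)) ee_true.
Qed.

Lemma Phi_om_u t (a : {ffun {perm 'I_t} -> K}) (tau : {perm 'I_t}) :
  Phi a (om K t) [ffun j => Some (tau j, true)] = a tau.
Proof.
rewrite PhiE (bigD1 tau) //= big1 ?addr0.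
  have -> : [ffun i => [ffun j => Some (tau j, true)] ((tau^-1)%g i)] =
     [ffun i => Some (tau ((tau^-1)%g i), true)] :> {ffun 'I_t -> Xs t}.
    by apply/ffunP => i; rewrite !ffunE.
  by rewrite om_perm big1 ?mulr1 // => i _; rewrite permKV eqxx.
move=> sg ne.
have -> : [ffun i => [ffun j => Some (tau j, true)] ((sg^-1)%g i)] =
     [ffun i => Some (tau ((sg^-1)%g i), true)] :> {ffun 'I_t -> Xs t}.
  by apply/ffunP => i; rewrite !ffunE.
have [j Hj] : exists j, sg j != tau j.
  case: (pickP (fun j => sg j != tau j)) => [j Hj|H]; first by exists j.
  by case/eqP: ne; apply/permP => j; apply/eqP; move/negbFE: (H j).
by rewrite om_perm (bigD1 (sg j)) //= permK eq_sym (negbTE Hj) mul0r mulr0.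
Qed.

End PhiSec.

Unset Implicit Arguments.

Theorem mainTheorem2 (K : fieldType) (s t : nat) :
  (* s > t : hom(Pbar^{(x)s}, Pbar^{(x)t}) = 0 *)
  ((t < s)%N ->
     forall F : forall X : finType, Pt K s X -> Pt K t X,
       NatTrans F -> forall (X : finType) (v : Pt K s X), Pbar v -> F X v = 0)
  /\
  (* s = t : Phi : K S_t -> End(Pbar^{(x)t}) is an isomorphism of K-algebras *)
  ((forall a, NatTrans (Phi (K := K) (t := t) a)) /\
   (forall X (v : Pt K t X), Pbar v -> Phi (galg_one K t) v = v) /\
   (forall a b X (v : Pt K t X), Pbar v ->
      Phi (galg_mul a b) v = Phi a (Phi b v)) /\
   (forall a, (forall X (v : Pt K t X), Pbar v -> Phi a v = 0) -> a = 0) /\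
   (forall F : forall X : finType, Pt K t X -> Pt K t X, NatTrans F ->
      exists a, forall X (v : Pt K t X), Pbar v -> F X v = Phi a v)).
Proof.
split.
  move=> lts F NF X v Pv.
  have NZ : NatTrans (fun X (_ : Pt K s X) => (0 : Pt K t X)).
    split; first by move=> *; exact: Pbar0.
    split; first by move=> *; rewrite addr0.
    split; first by move=> X0 c _ _; apply/ffunP=> u; rewrite !ffunE mulr0.
    by move=> X0 Y f _ _; rewrite Pmap0.
  have E : F _ (om K s) = 0.
    by apply: (zero_gt lts) => i u Hu; exact: (Z1_NT NF Hu).
  exact: (gen NF NZ E Pv).
split; first exact: NT_Phi.
split; first by move=> X v _; exact: Phi_one.
split; first by move=> a b X v _; exact: Phi_mul.
split.
  move=> a H; apply/ffunP => tau.
  by rewrite -(Phi_om_u a tau) (H _ _ (Pbar_om K t)) !ffunE.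
move=> F NF.
pose a := [ffun tau : {perm 'I_t} => F _ (om K t) [ffun j => Some (tau j, true) : Xs t]].
exists a; apply: (gen NF (NT_Phi a)).
apply/eqP; rewrite -subr_eq0; apply/eqP.
apply: zero_eq.
- move=> i u Hu.
  by rewrite addfE oppfE (Z1_NT NF Hu) (Z1_NT (NT_Phi a) Hu) subrr.
- move=> i u.
  by rewrite !addfE !oppfE (Z2_NT NF) (Z2_NT (NT_Phi a)) opprD.
- move=> sg.
  by rewrite addfE oppfE Phi_om_u /a ffunE subrr.
Qed.
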